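(* Let $k\geq 1$ and let $G$ be a $k$-degenerate graph on $n\geq 1$ vertices. Then $pdim(G) \leq \lceil 8.317\, k \log_2 n\rceil + 1$.
   Context: A graph $G$ is $k$-degenerate if its vertices admit an ordering $v_1,\dots,v_n$ such that each $v_i$ has at most $k$ neighbours among $\{v_j : j<i\}$. For a graph $G=(V,E)$ and $l\in\mathbb{N}$, an $l$-encoding of $G$ is an injective function $\phi: V\to\mathbb{N}^l$ such that for all $u,v\in V$, $\{u,v\}\in E$ if and only if $\phi(u)$ and $\phi(v)$ differ in all $l$ coordinates. The product dimension $pdim(G)$ is the minimum $l$ such that an $l$-encoding of $G$ exists. *)

(* Defs.v *)
From mathcomp Require Import all_boot.
From Stdlib Require Import Reals.
Set Implicit Arguments. Unset Strict Implicit. Unset Printing Implicit Defensive.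

Definition simple_graph (T : finType) (e : rel T) : Prop :=
  symmetric e /\ irreflexive e.

Definition degenerate (T : finType) (e : rel T) (k : nat) : Prop :=
  exists s : seq T, perm_eq s (enum T) /\
    forall x : T, count (e x) (take (index x s) s) <= k.

Definition encoding (T : finType) (e : rel T) (l : nat)
    (phi : T -> l.-tuple nat) : Prop :=
  injective phi /\
  forall u v : T, e u v <-> (forall i : 'I_l, tnth (phi u) i != tnth (phi v) i).

(* pdim(G) <= m, where pdim(G) is the minimum l admitting an l-encoding:
   i.e. some l <= m admits an l-encoding. *)
Definition pdim_le (T : finType) (e : rel T) (m : nat) : Prop :=
  exists l : nat, l <= m /\ exists phi : T -> l.-tuple nat, encoding e phi.

Definition Rceil (x : R) : Z := (- Int_part (- x))%Z.

Definition log2R (x : R) : R := (ln x / ln 2)%R.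

(* Main.v *)
Require Import Defs.
From mathcomp Require Import all_boot.
From Stdlib Require Import Reals.
From Stdlib Require Import Lra Lia ZArith.
From mathcomp Require Import zify.

Set Implicit Arguments. Unset Strict Implicit. Unset Printing Implicit Defensive.

Lemma card_mod (N a j : nat) : 0 < a -> a %| N -> j < a ->
  #|[set i : 'I_N | i %% a == j]| = N %/ a.
Proof.
move=> a0 aN ja.
have qa : N %/ a * a = N by rewrite divnK.
have Hf : forall t : 'I_(N %/ a), t * a + j < N.
  move=> t; have Ht := ltn_ord t; move: Ht qa; move: (N %/ a) t => q t Ht Hq.
  nia.
pose f (t : 'I_(N %/ a)) : 'I_N := Ordinal (Hf t).
have finj : injective f.
  move=> t1 t2 /(congr1 val) /= H; apply: val_inj => /=; nia.
rewrite -[RHS]card_ord -(card_imset (mem 'I_(N %/ a)) finj).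
apply: eq_card => i; rewrite !inE; apply/eqP/imsetP => [Hi|[t _ ->]].
  have Hq : i %/ a < N %/ a.
    rewrite ltn_divLR // qa; exact: ltn_ord.
  exists (Ordinal Hq) => //; apply: val_inj => /=.
  by rewrite -Hi -divn_eq.
by rewrite /= modnMDl modn_small.
Qed.

Section Core.
Variables (T : finType) (e : rel T) (s : seq T) (k m' : nat) (x0 : T).
Hypothesis esym : symmetric e.
Hypothesis eirr : irreflexive e.
Hypothesis sperm : perm_eq s (enum T).
Hypothesis degk : forall x, count (e x) (take (index x s) s) <= k.
Hypothesis mk : k < m'.+1.

Let m := m'.+1.
Let N := m`!.
Definition pos x := index x s.
Definition back x : {set T} := [set w | e x w && (pos w < pos x)].

Definition avail (f : T -> 'I_m) x : {set 'I_m} := ~: (f @: back x).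
Definition pick (A : {set 'I_m}) (i : 'I_N) : 'I_m :=
  nth ord0 (enum A) (i %% #|A|).

Lemma s_uniq : uniq s.
Proof. by rewrite (perm_uniq sperm) enum_uniq. Qed.
Lemma mem_s x : x \in s.
Proof. by rewrite (perm_mem sperm) mem_enum. Qed.
Lemma pos_inj : injective pos.
Proof. move=> x y H; exact: (index_inj x0 (mem_s x) (mem_s y) H). Qed.
Lemma pos_lt x : pos x < size s.
Proof. by rewrite /pos index_mem mem_s. Qed.

Lemma back_card x : #|back x| <= k.
Proof.
apply: leq_trans (degk x).
have E : back x =i [pred w in filter (e x) (take (index x s) s)].
  move=> w; rewrite !inE mem_filter in_take ?mem_s //.
rewrite (eq_card E) (card_uniqP _) ?size_filter //.
by rewrite filter_uniq // take_uniq // s_uniq.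
Qed.

Lemma avail_card f x : m - k <= #|avail f x|.
Proof.
rewrite /avail cardsCs setCK card_ord.
have := leq_imset_card f (back x); have := back_card x. move=> a b. move: (#|back x|) a b => z a b; rewrite leq_sub2l //; exact: leq_trans b a.
Qed.

Lemma avail_gt0 f x : 0 < #|avail f x|.
Proof. have := avail_card f x; lia. Qed.

Lemma pick_in (A : {set 'I_m}) i : 0 < #|A| -> pick A i \in A.
Proof.
move=> A0; rewrite /pick -mem_enum mem_nth // -cardE ltn_mod //.
Qed.

Lemma card_pick (A : {set 'I_m}) y : 0 < #|A| -> y \in A ->
  #|[set i : 'I_N | pick A i == y]| = N %/ #|A|.
Proof.
move=> A0 yA.
have dA : #|A| %| N.
  apply: dvdn_fact; rewrite A0 /=; have := max_card A; by rewrite card_ord.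
rewrite -(card_mod A0 dA (j := index y (enum A))); last by rewrite cardE index_mem mem_enum.
apply: eq_card => i; rewrite !inE /pick.
have ye : y = nth ord0 (enum A) (index y (enum A)) by rewrite nth_index ?mem_enum.
rewrite {1}ye; apply/eqP/eqP => [H|->//].
have := congr1 (fun z => index z (enum A)) H.
rewrite !index_uniq ?enum_uniq // -?cardE ?ltn_mod //.
by rewrite cardE index_mem mem_enum.
Qed.

Lemma card_pick_notin (A : {set 'I_m}) y : 0 < #|A| -> y \notin A ->
  #|[set i : 'I_N | pick A i == y]| = 0.
Proof.
move=> A0 yA; apply/eqP; rewrite cards_eq0; apply/eqP/setP => i; rewrite !inE.
apply/negbTE/negP => /eqP H.
by move: yA; rewrite -H pick_in.
Qed.

Local Notation Seed := {ffun T -> 'I_N}.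

Lemma avail_ext (f g : T -> 'I_m) x :
  (forall w, w \in back x -> f w = g w) -> avail f x = avail g x.
Proof. by move=> H; rewrite /avail (eq_in_imset H). Qed.

Lemma pos_nth i : i < size s -> pos (nth x0 s i) = i.
Proof. by move=> Hi; rewrite /pos index_uniq // s_uniq. Qed.

Definition colspec (r : Seed) (c : T -> 'I_m) (i : nat) :=
  forall x, pos x < i -> c x = pick (avail c x) (r x).

Lemma col_step (r : Seed) i : i <= size s -> {c | colspec r c i}.
Proof.
elim: i => [|i IH] Hi.
  by exists (fun _ => ord0) => x.
have [c Hc] := IH (ltnW Hi).
pose y := nth x0 s i.
have py : pos y = i by rewrite pos_nth.
exists (fun x => if x == y then pick (avail c y) (r y) else c x) => x Hx.
have E : forall z, pos z <= i ->
    avail (fun x => if x == y then pick (avail c y) (r y) else c x) z = avail c z.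
  move=> z Hz; apply: avail_ext => w; rewrite inE => /andP [_ Hw].
  case: eqP => // wy; move: Hw Hz; rewrite wy py; lia.
case: eqP => [->|xy].
  by rewrite E ?py.
have Hx' : pos x < i.
  move: Hx; rewrite ltnS leq_eqVlt => /orP [/eqP Hx|//].
  by case: xy; apply: pos_inj; rewrite py.
by rewrite E ?(ltnW Hx') // Hc.
Qed.

Definition col (r : Seed) : T -> 'I_m := sval (col_step r (leqnn (size s))).

Lemma colE r x : col r x = pick (avail (col r) x) (r x).
Proof. rewrite /col; case: (col_step _ _) => c Hc /=; apply: Hc; exact: pos_lt. Qed.

Lemma col_dep (r r' : Seed) x :
  (forall w, pos w <= pos x -> r w = r' w) -> col r x = col r' x.
Proof.
suff H : forall n x, pos x < n ->
    (forall w, pos w <= pos x -> r w = r' w) -> col r x = col r' x.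
  by apply: H; exact: ltnSn.
elim=> [//|n IH] {}x Hx Hr.
rewrite colE [RHS]colE Hr //; congr pick; apply: avail_ext => w.
rewrite inE => /andP [_ Hw]; apply: IH; first lia.
move=> w' Hw'; apply: Hr; lia.
Qed.

Lemma col_proper r u v : e u v -> col r u != col r v.
Proof.
wlog: u v / pos u < pos v.
  move=> W Huv; case: (ltngtP (pos u) (pos v)) => H; first exact: W.
    by rewrite eq_sym; apply: W => //; rewrite esym.
  by move: Huv; rewrite (pos_inj H) eirr.
move=> H Huv; rewrite [col r v]colE.
have : pick (avail (col r) v) (r v) \in avail (col r) v by apply: pick_in; apply: avail_gt0.
rewrite inE; apply: contra => /eqP <-; apply: imset_f.
by rewrite inE esym Huv H.
Qed.

Definition upd (r : Seed) v (x : 'I_N) : Seed := [ffun w => if w == v then x else r w].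

Lemma col_upd_before r v x w : pos w < pos v -> col (upd r v x) w = col r w.
Proof.
move=> H; apply: col_dep => w' Hw'; rewrite ffunE; case: eqP => // E.
by move: H Hw'; rewrite E; lia.
Qed.

Lemma col_upd_at r v x : col (upd r v x) v = pick (avail (col r) v) x.
Proof.
rewrite colE ffunE eqxx; congr pick; apply: avail_ext => w.
by rewrite inE => /andP [_ Hw]; rewrite col_upd_before.
Qed.

Lemma resample (F : Seed -> nat) v :
  N * \sum_(r : Seed) F r = \sum_(r : Seed) \sum_(x : 'I_N) F (upd r v x).
Proof.
pose h (p : Seed * 'I_N) : Seed * 'I_N := (upd p.1 v p.2, p.1 v).
have hinj : injective h.
  move=> [r1 x1] [r2 x2] /= [E1 E2].
  have Ex : x1 = x2.
    by have := congr1 (fun f : Seed => f v) E1; rewrite /= !ffunE eqxx.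
  subst x2; congr pair; apply/ffunP => w.
  have := congr1 (fun f : Seed => f w) E1; rewrite /= !ffunE.
  by case: eqP => [->|].
rewrite (pair_bigA _ (fun r x => F (upd r v x))) /=.
rewrite (reindex_inj hinj) /= -(pair_bigA _ (fun r x => F (upd (upd r v x) v (r v)))) /=.
rewrite big_distrr /=; apply: eq_bigr => r _.
rewrite (eq_bigr (fun=> F r)) ?sum_nat_const ?card_ord // => x _.
congr F; apply/ffunP => w; rewrite !ffunE; by case: eqP => [->|].
Qed.

Lemma sum_ind (I : finType) (P : pred I) : \sum_(i : I) (P i : nat) = #|[set i | P i]|.
Proof.
rewrite -sum1_card [RHS]big_mkcond; apply: eq_bigr => i _; rewrite inE; by case: (P i).
Qed.

Lemma N_gt0 : 0 < N. Proof. exact: fact_gt0. Qed.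

Lemma dvdN d : 0 < d -> d <= m -> d %| N.
Proof. by move=> d0 dm; apply: dvdn_fact; rewrite d0. Qed.

Lemma inner_sum r y z :
  \sum_(x : 'I_N) (col (upd r z x) y == col (upd r z x) z : nat)
  = #|[set x : 'I_N | pick (avail (col r) z) x == col r y]|
  -> True.
Proof. by []. Qed.

Lemma resample_eq y z : pos y < pos z ->
  N * \sum_(r : Seed) (col r y == col r z : nat)
  = \sum_(r : Seed) #|[set x : 'I_N | pick (avail (col r) z) x == col r y]|.
Proof.
move=> H; rewrite (resample (fun r => (col r y == col r z : nat)) z).
apply: eq_bigr => r _; rewrite -sum_ind; apply: eq_bigr => x _.
by rewrite col_upd_before // col_upd_at eq_sym.
Qed.

Lemma upper y z : y != z ->
  (m - k) * \sum_(r : Seed) (col r y == col r z : nat) <= #|{ffun T -> 'I_N}|.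
Proof.
wlog H : y z / pos y < pos z.
  move=> W yz; case: (ltngtP (pos y) (pos z)) => H; first exact: W.
    under eq_bigr => r _ do rewrite eq_sym.
    by apply: W; rewrite // eq_sym.
  by move: yz; rewrite (pos_inj H) eqxx.
move=> yz.
have mk0 : 0 < m - k by lia.
have E2 := divnK (dvdN mk0 (leq_subr k m)).
have E1 : N * \sum_(r : Seed) (col r y == col r z : nat) <= #|{ffun T -> 'I_N}| * (N %/ (m - k)).
  rewrite resample_eq //; apply: (@leq_trans (\sum_(r : Seed) N %/ (m - k))); last by rewrite sum_nat_const.
  apply: leq_sum => r _.
  case: (boolP (col r y \in avail (col r) z)) => Hin.
    rewrite card_pick ?avail_gt0 //; apply: leq_div2l => //; exact: avail_card.
  by rewrite card_pick_notin ?avail_gt0.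
rewrite -(leq_pmul2l N_gt0).
move: E1 E2; set S := \sum_(r : Seed) _; set q := N %/ (m - k); set O := #|{ffun T -> 'I_N}|.
set d := m - k; move: (N) => n; nia.
Qed.

Lemma lower u v : 0 < k -> 2 * k < m -> u != v -> ~~ e u v ->
  (m - 2 * k) * #|{ffun T -> 'I_N}| <=
  (m - k) * (m - 1) * \sum_(r : Seed) (col r u == col r v : nat).
Proof.
move=> k0 m2k.
wlog H : u v / pos u < pos v.
  move=> W yz nuv; case: (ltngtP (pos u) (pos v)) => H; first exact: W.
    under eq_bigr => r _ do rewrite eq_sym.
    by apply: W; rewrite // 1?eq_sym // esym.
  by move: yz; rewrite (pos_inj H) eqxx.
move=> uv nuv.
have RE := resample_eq H.
set G := \sum_(r : Seed) _ in RE *.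
set O := #|{ffun T -> 'I_N}|.
have [B0|Bn0] := eqVneq (back v) set0.
  have AT : forall r : Seed, avail (col r) v = setT.
    by move=> r; rewrite /avail B0 imset0 setC0.
  have mpos : 0 < m by [].
  have Em := divnK (dvdN mpos (leqnn m)).
  have E1 : N * G = O * (N %/ m).
    rewrite RE -sum_nat_const; apply: eq_bigr => r _.
    by rewrite AT card_pick ?cardsT ?card_ord ?in_setT.
  have E3 : m * G = O.
    apply/eqP; rewrite -(eqn_pmul2l N_gt0); apply/eqP.
    have Np := N_gt0; move: E1 Em Np; move: (N %/ m) => q; move: (G) (O) (N) => g o n; nia.
  move: E3; move: (G) (O) => g o E3. nia.
have m1 : 0 < m - 1 by lia.
have Em1 := divnK (dvdN m1 (leq_subr 1 m)).
set Good := \sum_(r : Seed) (col r u \in avail (col r) v : nat).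
set Bad := \sum_(r : Seed) (col r u \notin avail (col r) v : nat).
have GB : Good + Bad = O.
  rewrite /Good /Bad -big_split /= -[O]muln1 -sum_nat_const.
  by apply: eq_bigr => r _; case: (_ \in _).
have E1 : N %/ (m - 1) * Good <= N * G.
  rewrite RE /Good big_distrr /= leq_sum // => r _.
  case: (boolP (col r u \in avail (col r) v)) => Hin; last by rewrite muln0.
  rewrite muln1 card_pick ?avail_gt0 //; apply: leq_div2l; first exact: avail_gt0.
  rewrite /avail cardsCs setCK card_ord.
  have : 0 < #|[set col r x | x in back v]|.
    rewrite card_gt0; apply: contra Bn0; rewrite imset_eq0 //.
  by move=> H0; rewrite leq_sub2l.
have E4 : (m - 1) * G >= Good.
  rewrite -(leq_pmul2l N_gt0); move: E1 Em1; move: (N %/ (m - 1)) => q.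
  move: (m - 1) => d; move: (N) (G) (Good) => n g gd; nia.
have E5 : (m - k) * Bad <= k * O.
  have S1 : Bad <= \sum_(w in back v) \sum_(r : Seed) (col r u == col r w : nat).
    rewrite exchange_big /Bad leq_sum // => r _.
    case: (boolP (col r u \in avail (col r) v)) => Hin //.
    move: Hin; rewrite inE negbK => /imsetP [w Hw ->].
    by rewrite (bigD1 w) //= eqxx.
  apply: (leq_trans (leq_mul (leqnn _) S1)).
  rewrite big_distrr /=.
  apply: (@leq_trans (\sum_(w in back v) O)); last first.
    by rewrite sum_nat_const leq_mul2r back_card orbT.
  apply: leq_sum => w Hw; apply: upper.
  apply: contraNneq nuv => ->; move: Hw; rewrite inE => /andP [Hw _].
  by rewrite esym.
move: GB E4 E5; move: (G) (O) (Good) (Bad) => g o gd bd GB E4 E5.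
nia.
Qed.

Lemma exists_good (L : nat) :
  \sum_(u : T) \sum_(v : T) ((u != v) && ~~ e u v : nat) *
     expn (\sum_(r : Seed) (col r u != col r v : nat)) L
  < expn #|{ffun T -> 'I_N}| L ->
  exists R : {ffun 'I_L -> Seed}, forall u v, u != v -> ~~ e u v ->
    exists i, col (R i) u = col (R i) v.
Proof.
move=> Hlt.
case: (boolP [exists R : {ffun 'I_L -> Seed}, [forall u, [forall v,
   ((u != v) && ~~ e u v) ==> [exists i, col (R i) u == col (R i) v]]]]).
  move=> /existsP [R HR]; exists R => u v uv nuv.
  move: HR => /forallP /(_ u) /forallP /(_ v); rewrite uv nuv /= => /existsP [i /eqP Hi].
  by exists i.
move=> Hno; exfalso; move: Hlt; apply/negP; rewrite -leqNgt.
have Hpow : forall (u v : T),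
   expn (\sum_(r : Seed) (col r u != col r v : nat)) L =
   \sum_(R : {ffun 'I_L -> Seed}) \prod_(i : 'I_L) (col (R i) u != col (R i) v : nat).
  move=> u v; rewrite -(bigA_distr_bigA (fun (i : 'I_L) (r : Seed) => (col r u != col r v : nat))).
  by rewrite prod_nat_const card_ord.
under eq_bigr => u _ do under eq_bigr => v _ do rewrite Hpow big_distrr /=.
have Ecard : #|{ffun 'I_L -> Seed}| = expn #|{ffun T -> 'I_N}| L by rewrite card_ffun card_ord.
rewrite -Ecard -sum1_card.
rewrite (pair_bigA _ (fun u v => \sum_(R : {ffun 'I_L -> Seed}) _)) /= exchange_big /=.
apply: leq_sum => R _.
move: Hno; rewrite negb_exists => /forallP /(_ R); rewrite negb_forall => /existsP [u].
rewrite negb_forall => /existsP [v]; rewrite negb_imply => /andP [Huv Hi].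
rewrite (bigD1 (u, v)) //= Huv mul1n.
apply: leq_trans (leq_addr _ _).
rewrite big1 // => i _; move: Hi; rewrite negb_exists => /forallP /(_ i) ->.
by [].
Qed.

Lemma expn_mono a b L : a <= b -> expn a L <= expn b L.
Proof. move=> ab; elim: L => [|L IH]; rewrite ?expn0 // !expnS; exact: leq_mul. Qed.

Lemma main_comb (L : nat) : 0 < k -> 2 * k < m ->
  (#|T| <= 1 \/
   #|T| * #|T| * expn ((m - k) * (m - 1) - (m - 2 * k)) L < expn ((m - k) * (m - 1)) L) ->
  exists R : {ffun 'I_L -> Seed}, forall u v, u != v -> ~~ e u v ->
    exists i, col (R i) u = col (R i) v.
Proof.
move=> k0 m2k Hcase; apply: exists_good.
set O := #|{ffun T -> 'I_N}|.
have O0 : 0 < O by rewrite /O card_ffun expn_gt0 card_ord N_gt0.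
case: Hcase => [T1|Hlt].
  rewrite big1 => [|u _]; first by rewrite expn_gt0 O0.
  rewrite big1 // => v _.
  case: eqP => [->//|uv].
  exfalso; have : 1 < #|T| by apply/card_gt1P; exists u, v; split => //; apply/eqP.
  by rewrite ltnNge T1.
set D := (m - k) * (m - 1).
set E := m - 2 * k.
have D0 : 0 < D by rewrite /D muln_gt0; apply/andP; split; lia.
have term : forall u v, D * ((u != v) && ~~ e u v) * \sum_(r : Seed) (col r u != col r v : nat)
    <= (D - E) * O.
  move=> u v; case: (boolP ((u != v) && ~~ e u v)) => [/andP [uv nuv]|_]; last by rewrite muln0.
  have Lo := lower k0 m2k uv nuv.
  have GB : \sum_(r : Seed) (col r u == col r v : nat) + \sum_(r : Seed) (col r u != col r v : nat) = O.
    rewrite -big_split /= -[O]muln1 -sum_nat_const.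
    by apply: eq_bigr => r _; case: (_ == _).
  move: Lo GB; rewrite -/O -/D -/E muln1.
  move: (\sum_(r : Seed) (col r u == col r v : nat)) (\sum_(r : Seed) (col r u != col r v : nat)) => g b.
  move: (D) (E) (O) => d ee o; nia.
have Hsum : expn D L * (\sum_(u : T) \sum_(v : T) ((u != v) && ~~ e u v : nat) *
     expn (\sum_(r : Seed) (col r u != col r v : nat)) L)
   <= #|T| * #|T| * expn (D - E) L * expn O L.
  apply: (@leq_trans (\sum_(u : T) \sum_(v : T) (expn (D - E) L * expn O L))); last first.
    by rewrite sum_nat_const sum_nat_const !mulnA.
  rewrite big_distrr /=; apply: leq_sum => u _; rewrite big_distrr /=.
  apply: leq_sum => v _.
  set c := ((u != v) && ~~ e u v : nat).
  have c1 : c <= 1 by rewrite /c; case: (_ && _).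
  have := expn_mono L (term u v).
  rewrite -/c -!expnMn.
  case: (c) c1 => [|[|//]] _; first by move=> _; rewrite mul0n muln0.
  by rewrite muln1 mul1n -expnMn.
have DL : 0 < expn D L by rewrite expn_gt0 D0.
rewrite -(ltn_pmul2l DL).
apply: (leq_ltn_trans Hsum); rewrite ltn_pmul2r //; by rewrite expn_gt0 O0.
Qed.

Definition phi_of L (R : {ffun 'I_L -> Seed}) (v : T) : (L + 1).-tuple nat :=
  [tuple (if (insub (j : nat) : option 'I_L) is Some i then (col (R i) v : nat) else pos v) | j < L + 1].

Lemma phi_encoding L (R : {ffun 'I_L -> Seed}) :
  (forall u v, u != v -> ~~ e u v -> exists i, col (R i) u = col (R i) v) ->
  encoding e (phi_of R).
Proof.
move=> HR.
have lastL : L < L + 1 by rewrite addn1.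
pose jl := Ordinal lastL.
have Hjl : (insub (jl : nat) : option 'I_L) = None by rewrite insubN // ltnn.
split.
  move=> u v /(congr1 (fun t => tnth t jl)); rewrite !tnth_mktuple Hjl.
  exact: pos_inj.
move=> u v; split.
  move=> Huv j; rewrite !tnth_mktuple.
  case: insubP => [i _ _|_].
    by rewrite (eqtype.inj_eq val_inj) col_proper.
  apply/eqP => /pos_inj E; by move: Huv; rewrite E eirr.
move=> H; apply/negPn/negP => nuv.
case: (eqVneq u v) => [E|uv].
  by have := H jl; rewrite E eqxx.
have [i Hi] := HR u v uv nuv.
have ji : (i : nat) < L + 1 by rewrite addn1 ltnS ltnW.
have := H (Ordinal ji); rewrite !tnth_mktuple.
case: insubP => [i' _ /= Ei|/=]; last by rewrite ltn_ord.
have -> : i' = i by apply: val_inj.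
by rewrite Hi eqxx.
Qed.

End Core.

Unset Implicit Arguments. Set Strict Implicit. Set Printing Implicit Defensive.

Lemma expn_pow a b : expn a b = Nat.pow a b.
Proof. elim: b => [|b IH]; first by rewrite expn0. by rewrite expnS IH. Qed.

Lemma exp_mulINR (L : nat) (y : R) : exp (INR L * y) = (exp y ^ L)%R.
Proof.
elim: L => [|L IH]; first by rewrite Rmult_0_l exp_0.
rewrite S_INR Rmult_plus_distr_r Rmult_1_l exp_plus IH /=; ring.
Qed.

Lemma sq_step (y c : R) : (c <= exp y)%R -> (0 <= c)%R -> (c * c <= exp (2 * y))%R.
Proof.
move=> cy c0; have -> : (2 * y = y + y)%R by ring.
rewrite exp_plus; apply: Rmult_le_compat => //.
Qed.

Lemma ln2_lt : (ln 2 < 706 / 1000)%R.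
Proof.
have h0 : (101103125 / 100000000 <= exp (706 / 1000 / 64))%R.
  have := exp_ineq1_le (706 / 1000 / 64); lra.
have h1 := sq_step _ _ h0 (ltac:(lra)).
have h1' : (102218 / 100000 <= exp (2 * (706 / 1000 / 64)))%R by lra.
have h2 := sq_step _ _ h1' (ltac:(lra)).
have h2' : (104485 / 100000 <= exp (2 * (2 * (706 / 1000 / 64))))%R by lra.
have h3 := sq_step _ _ h2' (ltac:(lra)).
have h3' : (109171 / 100000 <= exp (2 * (2 * (2 * (706 / 1000 / 64)))))%R by lra.
have h4 := sq_step _ _ h3' (ltac:(lra)).
have h4' : (119183 / 100000 <= exp (2 * (2 * (2 * (2 * (706 / 1000 / 64))))))%R by lra.
have h5 := sq_step _ _ h4' (ltac:(lra)).
have h5' : (142045 / 100000 <= exp (2 * (2 * (2 * (2 * (2 * (706 / 1000 / 64)))))))%R by lra.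
have h6 := sq_step _ _ h5' (ltac:(lra)).
have -> : (706 / 1000 = 2 * (2 * (2 * (2 * (2 * (2 * (706 / 1000 / 64)))))))%R by field.
rewrite -[X in (_ < X)%R]ln_exp; apply: ln_increasing; lra.
Qed.

Lemma INR_muln a b : INR (a * b) = (INR a * INR b)%R.
Proof. exact: mult_INR. Qed.

Lemma INR_expn a b : INR (expn a b) = (INR a ^ b)%R.
Proof. by rewrite expn_pow pow_INR. Qed.

Lemma INR_subn a b : b <= a -> INR (a - b) = (INR a - INR b)%R.
Proof. move=> /leP H; exact: minus_INR. Qed.

Lemma key_real (n k L D E : nat) : 2 <= n -> 0 < k -> E <= D -> 0 < D ->
  17 * D <= 100 * k * E ->
  (8317 / 1000 * INR k * (ln (INR n) / ln 2) <= INR L)%R ->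
  n * n * expn (D - E) L < expn D L.
Proof.
move=> n2 k0 ED D0 Hkd HL.
apply/ltP; apply: INR_lt.
rewrite !INR_muln !INR_expn INR_subn //.
have hn : (2 <= INR n)%R by apply: (le_INR 2); apply/leP.
have hk : (1 <= INR k)%R by apply: (le_INR 1); apply/leP.
have hd : (1 <= INR D)%R by apply: (le_INR 1); apply/leP.
have hed : (INR E <= INR D)%R by apply: le_INR; apply/leP.
have he0 : (0 <= INR E)%R by apply: pos_INR.
have hkd : (17 * INR D <= 100 * INR k * INR E)%R.
  have := le_INR _ _ (elimT leP Hkd); rewrite !INR_muln.
  have -> : INR 17 = 17%R by rewrite /= ; ring.
  have -> : INR 100 = 100%R by rewrite /=; ring.
  by [].
set d := INR D in hd hed hkd *.
set ee := INR E in hed he0 hkd *.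
set p := (ee / d)%R.
have dp : (d - ee = d * (1 - p))%R by rewrite /p; field; lra.
rewrite dp Rpow_mult_distr.
have p0 : (0 <= p)%R.
  rewrite /p /Rdiv; apply: Rmult_le_pos => //; apply: Rlt_le; apply: Rinv_0_lt_compat; lra.
have p1 : (p <= 1)%R.
  rewrite /p; apply/(Rmult_le_reg_r d); first lra.
  by rewrite /Rdiv Rmult_assoc Rinv_l; lra.
have hp : (17 / 100 <= p * INR k)%R.
  rewrite /p; apply/(Rmult_le_reg_r d); first lra.
  have -> : (ee / d * INR k * d = ee * INR k)%R by field; lra.
  lra.
have ln2p : (0 < ln 2)%R by rewrite -ln_1; apply: ln_increasing; lra.
have ln2l := ln2_lt.
have lnn : (0 < ln (INR n))%R by rewrite -ln_1; apply: ln_increasing; lra.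
have Hx : (2 * ln (INR n) < p * INR L)%R.
  apply: (Rlt_le_trans _ (p * (8317 / 1000 * INR k * (ln (INR n) / ln 2)))); last first.
    by apply: Rmult_le_compat_l.
  have -> : (p * (8317 / 1000 * INR k * (ln (INR n) / ln 2)) =
             (p * INR k) * (8317 / 1000) * ln (INR n) / ln 2)%R by field; lra.
  apply/(Rmult_lt_reg_r (ln 2)) => //.
  have -> : (p * INR k * (8317 / 1000) * ln (INR n) / ln 2 * ln 2 =
             p * INR k * (8317 / 1000) * ln (INR n))%R by field; lra.
  have H1 : (17 / 100 * (8317 / 1000) * ln (INR n) <= p * INR k * (8317 / 1000) * ln (INR n))%R.
    apply: Rmult_le_compat_r; first lra.
    apply: Rmult_le_compat_r; lra.
  nra.
have He : ((1 - p) ^ L <= exp (- (p * INR L)))%R.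
  have -> : (- (p * INR L) = INR L * (- p))%R by ring.
  rewrite exp_mulINR; apply: pow_incr; split; first lra.
  have := exp_ineq1_le (- p); lra.
have He2 : (exp (- (p * INR L)) < / (INR n * INR n))%R.
  have -> : (/ (INR n * INR n) = exp (- (2 * ln (INR n))))%R.
    rewrite exp_Ropp; have -> : (2 * ln (INR n) = ln (INR n) + ln (INR n))%R by ring.
    by rewrite exp_plus exp_ln //; lra.
  apply: exp_increasing; lra.
have dL : (0 < d ^ L)%R by apply: pow_lt; lra.
have nn : (0 < INR n * INR n)%R by nra.
have H3 : (INR n * INR n * (1 - p) ^ L < 1)%R.
  have := Rmult_lt_compat_l _ _ _ nn (Rle_lt_trans _ _ _ He He2).
  by rewrite Rinv_r; lra.
nra.
Qed.

Lemma nat_ineq k : 0 < k ->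
  17 * (((3 * k + k./2).+1 - k) * ((3 * k + k./2).+1 - 1)) <=
  100 * k * ((3 * k + k./2).+1 - 2 * k).
Proof.
move=> k0; have := odd_double_half k; rewrite -muln2.
move: (k./2) => q.
have e1 : (3 * k + q).+1 - k = 2 * k + q + 1 by lia.
have e2 : (3 * k + q).+1 - 1 = 3 * k + q by lia.
have e3 : (3 * k + q).+1 - 2 * k = k + q + 1 by lia.
rewrite e1 e2 e3.
case: (odd k) => /= <-; nia.
Qed.

Lemma ceil_ge x : (0 <= x)%R -> (x <= INR (Z.to_nat (Rceil x)))%R.
Proof.
move=> x0; rewrite /Rceil.
have [h1 h2] := base_Int_part (- x).
have H : (x <= IZR (- Int_part (- x)))%R by rewrite opp_IZR; lra.
have Hz : (0 <= - Int_part (- x))%Z by apply: le_IZR; lra.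
by rewrite INR_IZR_INZ Z2Nat.id.
Qed.

Theorem theorem3 (T : finType) (e : rel T) (k : nat) :
  simple_graph e -> 1 <= k -> 1 <= #|T| -> degenerate e k ->
  pdim_le e
    (Z.to_nat (Rceil (8317 / 1000 * INR k * log2R (INR #|T|))%R) + 1).
Proof.
move=> [esym eirr] k1 n1 [s [sperm degk]].
have /card_gt0P [x0 _] := n1.
have mk : k < (3 * k + k./2).+1 by lia.
have m2k : 2 * k < (3 * k + k./2).+1 by lia.
set L := Z.to_nat _.
have Hc : #|T| <= 1 \/
   #|T| * #|T| * expn (((3 * k + k./2).+1 - k) * ((3 * k + k./2).+1 - 1) -
     ((3 * k + k./2).+1 - 2 * k)) L <
   expn (((3 * k + k./2).+1 - k) * ((3 * k + k./2).+1 - 1)) L.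
  case: (leqP #|T| 1) => [Tn|Tn]; [by left | right].
  apply: key_real.
  - exact: Tn.
  - exact: k1.
  - apply: (@leq_trans ((3 * k + k./2).+1 - k)); first lia.
    apply: leq_pmulr; lia.
  - rewrite muln_gt0; apply/andP; split; lia.
  - exact: nat_ineq.
  rewrite /L; apply: ceil_ge.
  have hn : (2 <= INR #|T|)%R by apply: (le_INR 2); apply/leP.
  have lnn : (0 < ln (INR #|T|))%R by rewrite -ln_1; apply: ln_increasing; lra.
  have ln2p : (0 < ln 2)%R by rewrite -ln_1; apply: ln_increasing; lra.
  rewrite /log2R; apply: Rmult_le_pos.
    apply: Rmult_le_pos; [lra | exact: pos_INR].
  apply: Rlt_le; apply: Rdiv_lt_0_compat => //.
have [R HR] := main_comb x0 esym sperm degk mk k1 m2k Hc.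
exists (L + 1); split => //.
exists (phi_of e x0 sperm mk R).
exact: (phi_encoding esym eirr degk HR).
Qed.
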